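(* Let $N_0\in\mathbb{N}$. Let $E=E(a_1,\dots,a_n)$ and $E'=E(b_1,\dots,b_n)$ be bounded ellipsoids in $\mathbb{R}^{2n}$ ($0<a_1\le\dots\le a_n<\infty$, $0<b_1\le\dots\le b_n<\infty$). Suppose an increasing sequence $d_1\le d_2\le\dots$ of real numbers is obtained from the sequence $c_1^{\mathrm{EH}}(E)\le c_2^{\mathrm{EH}}(E)\le\dots$ by removing at most $N_0$ terms, and is also obtained from $c_1^{\mathrm{EH}}(E')\le c_2^{\mathrm{EH}}(E')\le\dots$ by removing at most $N_0$ terms. Then $E=E'$, i.e. $a_i=b_i$ for all $i$. (In other words, a bounded ellipsoid can be recovered uniquely from its Ekeland–Hofer sequence with at most $N_0$ terms removed.)
   Context: $E(a_1,\dots,a_n)=\{z\in\mathbb{C}^n:\sum_j|z_j|^2/a_j<1\}$. The Ekeland–Hofer capacities on ellipsoids are given as follows: writing the numbers $m\,a_i\pi$ ($m\in\mathbb{N}$, $1\le i\le n$) in increasing order with repetitions as $\delta_1\le \delta_2\le\dots$, one has $c_k^{\mathrm{EH}}(E(a_1,\dots,a_n))=\delta_k$. Removing terms means deleting entries (counted with multiplicity) from the sequence. *)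

(* Defs.v *)
(* concrete reals R, PI. Indices are 0-based. *)
From Stdlib Require Import Reals List Arith Lia.
Open Scope R_scope.

Definition ellipsoid_params (n : nat) (a : nat -> R) : Prop :=
  0 < a 0%nat /\ forall i, (S i < n)%nat -> a i <= a (S i).

(* The ellipsoid itself, as a subset of C^n = R^{2n} (z_j = x j + i y j). *)
Definition ellipsoid (n : nat) (a : nat -> R) (x y : nat -> R) : Prop :=
  sum_f_R0 (fun j => if Nat.ltb j n then (x j ^ 2 + y j ^ 2) / a j else 0)
           (Nat.pred n) < 1.

(* c is the Ekeland–Hofer sequence of E(a): the numbers (m+1) * a_i * PI,
   (m : nat, i < n) listed in nondecreasing order with repetitions.
   c k is the (k+1)-th EH capacity c_{k+1}^{EH}(E(a)). *)
Definition is_EH_seq (n : nat) (a : nat -> R) (c : nat -> R) : Prop :=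
  (forall k l, (k <= l)%nat -> c k <= c l) /\
  exists f : nat -> nat * nat,
    (forall k, (fst (f k) < n)%nat) /\
    (forall k l, f k = f l -> k = l) /\
    (forall i m, (i < n)%nat -> exists k, f k = (i, m)) /\
    (forall k, c k = INR (S (snd (f k))) * a (fst (f k)) * PI).

(* d is obtained from c by removing at most N0 terms (counted with
   multiplicity, i.e. positions): d = c o s with s strictly increasing and
   at most N0 indices outside the range of s. *)
Definition removes_at_most (N0 : nat) (c d : nat -> R) : Prop :=
  exists s : nat -> nat,
    (forall k, (s k < s (S k))%nat) /\
    (forall k, d k = c (s k)) /\
    exists L : list nat, (length L <= N0)%nat /\
      forall j, (forall k, s k <> j) -> In j L.

(* Main.v *)
Require Import Defs.
From Stdlib Require Import Reals List Arith.
From Stdlib Require Import Lia Lra Classical ClassicalEpsilon ZArith.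
Open Scope R_scope.

Lemma unb (r : R) : exists K : nat, r < INR K.
Proof.
  destruct (archimed r) as [H _].
  exists (Z.to_nat (up r)).
  destruct (Z_le_gt_dec 0 (up r)) as [h|h].
  - rewrite INR_IZR_INZ, Z2Nat.id; [lra|lia].
  - assert (IZR (up r) < 0) by (apply IZR_lt; lia).
    pose proof (pos_INR (Z.to_nat (up r))). lra.
Qed.

Lemma smono (s : nat -> nat) : (forall k, (s k < s (S k))%nat) ->
  forall k l, (k <= l)%nat -> (s k <= s l)%nat.
Proof.
  intros Hs k l H. induction H; auto. specialize (Hs m). lia.
Qed.

Lemma sge (s : nat -> nat) : (forall k, (s k < s (S k))%nat) ->
  forall k, (k <= s k)%nat.
Proof.
  intros Hs k. induction k; [lia|]. specialize (Hs k). lia.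
Qed.

Lemma tail_shift N0 c d : removes_at_most N0 c d ->
  exists K p, forall t, d (K + t)%nat = c (p + t)%nat.
Proof.
  intros [s [Hs [Hd [L [_ HL]]]]].
  set (B := list_max L).
  assert (HLB : forall j, (forall k, s k <> j) -> (j <= B)%nat).
  { intros j Hj. pose proof (proj1 (list_max_le L B) (le_n _)) as F.
    rewrite Forall_forall in F. apply F, HL, Hj. }
  assert (Hstep : forall k, (B <= s k)%nat -> s (S k) = S (s k)).
  { intros k Hk. destruct (Nat.eq_dec (s (S k)) (S (s k))) as [e|ne]; auto.
    exfalso. pose proof (Hs k).
    assert (S (s k) <= B)%nat.
    { apply HLB. intros k' Hk'. destruct (le_lt_dec k' k) as [h|h].
      - pose proof (smono s Hs _ _ h). lia.
      - pose proof (smono s Hs (S k) k' h). lia. }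
    lia. }
  exists B, (s B). intro t. rewrite Hd. f_equal.
  induction t. { rewrite !Nat.add_0_r; reflexivity. }
  rewrite Nat.add_succ_r, Hstep, IHt. lia.
  pose proof (sge s Hs (B + t)). lia.
Qed.

Lemma sorted_le n (a : nat -> R) : ellipsoid_params n a ->
  forall j k, (j <= k)%nat -> (k < n)%nat -> a j <= a k.
Proof.
  intros [_ H] j k Hjk. induction Hjk; intros; [lra|].
  specialize (H m ltac:(lia)). specialize (IHHjk ltac:(lia)). lra.
Qed.

Lemma pos_el n (a : nat -> R) : ellipsoid_params n a ->
  forall j, (j < n)%nat -> 0 < a j.
Proof.
  intros Ha j Hj. pose proof (sorted_le n a Ha 0 j ltac:(lia) Hj).
  destruct Ha. lra.
Qed.

Lemma avoid (l : list R) (v : R) : 0 < v -> (forall t, In t l -> v < t) ->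
  exists D : nat, (1 <= D)%nat /\ forall K : nat, forall t, In t l ->
    forall q : nat, INR (S (K * D)) * v <> INR q * t.
Proof.
  intros Hv. induction l as [|t l IH]; intros Hl.
  - exists 1%nat. split; [lia|]. intros K t [].
  - destruct IH as [D [HD HI]]. { intros; apply Hl; simpl; auto. }
    assert (Ht : v < t) by (apply Hl; simpl; auto).
    destruct (classic (exists E m : nat, (1 <= E)%nat /\ INR E * v = INR m * t))
      as [[E [m [HE Hm]]]|Hn].
    + exists (D * E)%nat. split; [nia|].
      intros K t' [<-|Hin] q Heq.
      *
        assert (Hz : v = IZR (Z.of_nat q - Z.of_nat K * Z.of_nat D * Z.of_nat m) * t).
        { rewrite minus_IZR, !mult_IZR, <- !INR_IZR_INZ.
          rewrite S_INR, !mult_INR in Heq.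
          rewrite Rmult_minus_distr_r, <- Heq.
          replace (INR K * INR D * INR m * t) with (INR K * INR D * (INR E * v))
            by (rewrite Hm; ring). ring. }
        set (z := (Z.of_nat q - Z.of_nat K * Z.of_nat D * Z.of_nat m)%Z) in Hz.
        destruct (Z_le_gt_dec z 0) as [h|h].
        -- apply IZR_le in h. nra.
        -- assert (IZR z >= 1) by (apply Rle_ge, IZR_le; lia). nra.
      * apply (HI (K * E)%nat t' Hin q). rewrite <- Heq.
        f_equal. f_equal. f_equal. lia.
    + exists D. split; auto. intros K t' [<-|Hin] q Heq.
      * apply Hn. exists (S (K * D)), q. split; [lia|]. auto.
      * apply (HI K t' Hin q Heq).
Qed.

Lemma nodup_map_in (f : nat -> nat) (l : list nat) : NoDup l ->
  (forall x y, In x l -> In y l -> f x = f y -> x = y) -> NoDup (map f l).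
Proof.
  induction l as [|x l IH]; intros Hn Hi; simpl; [constructor|].
  inversion Hn; subst. constructor.
  - intros Hin. apply in_map_iff in Hin as [y [Hy Hyl]].
    assert (y = x) by (apply Hi; simpl; auto). subst; contradiction.
  - apply IH; auto. intros; apply Hi; simpl; auto.
Qed.

Lemma php (Q : nat -> Prop) (Rl : nat -> nat -> Prop) (i : nat) : Q i ->
  (forall j, (j <= i)%nat -> Q j -> exists j', (j' < i)%nat /\ Q j' /\ Rl j j') ->
  (forall j1 j2 j', Rl j1 j' -> Rl j2 j' -> j1 = j2) -> False.
Proof.
  intros Qi H Hinj.
  assert (G : forall j, {j' | (j <= i)%nat -> Q j -> (j' < i)%nat /\ Q j' /\ Rl j j'}).
  { intro j. apply constructive_indefinite_description.
    destruct (classic ((j <= i)%nat /\ Q j)) as [[h1 h2]|hn].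
    - destruct (H j h1 h2) as [j' Hj']. exists j'; auto.
    - exists 0%nat. intros h1 h2; exfalso; auto. }
  set (g := fun j => proj1_sig (G j)).
  set (qb := fun j => if excluded_middle_informative (Q j) then true else false).
  assert (Hqb : forall j, qb j = true <-> Q j).
  { intro j; unfold qb; destruct (excluded_middle_informative (Q j)); split; auto; discriminate. }
  set (l1 := filter qb (seq 0 (S i))). set (l2 := filter qb (seq 0 i)).
  assert (Hl : length l1 = S (length l2)).
  { unfold l1, l2. rewrite seq_S, filter_app, length_app. simpl.
    destruct (qb i) eqn:E. simpl; lia. apply Hqb in Qi. congruence. }
  assert (ND : NoDup (map g l1)).
  { apply nodup_map_in. apply NoDup_filter, seq_NoDup.
    intros x y Hx Hy Hxy. unfold l1 in *.
    apply filter_In in Hx as [Hx1 Hx2]. apply filter_In in Hy as [Hy1 Hy2].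
    apply in_seq in Hx1. apply in_seq in Hy1.
    apply Hqb in Hx2. apply Hqb in Hy2.
    destruct (proj2_sig (G x) ltac:(lia) Hx2) as [_ [_ R1]].
    destruct (proj2_sig (G y) ltac:(lia) Hy2) as [_ [_ R2]].
    unfold g in Hxy. rewrite Hxy in R1. eauto. }
  assert (INC : incl (map g l1) l2).
  { intros y Hy. apply in_map_iff in Hy as [x [<- Hx]].
    unfold l1 in Hx. apply filter_In in Hx as [Hx1 Hx2].
    apply in_seq in Hx1. apply Hqb in Hx2.
    destruct (proj2_sig (G x) ltac:(lia) Hx2) as [A1 [A2 _]].
    unfold l2. apply filter_In. split.
    - apply in_seq. unfold g. lia.
    - apply Hqb. exact A2. }
  pose proof (NoDup_incl_length ND INC). rewrite length_map in H0. lia.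
Qed.

Lemma core (n : nat) (a b c c' : nat -> R) (P P' : nat) :
  ellipsoid_params n a -> ellipsoid_params n b ->
  is_EH_seq n a c -> is_EH_seq n b c' ->
  (forall t, c (P + t)%nat = c' (P' + t)%nat) ->
  forall i, (i < n)%nat -> (forall j, (j < i)%nat -> a j = b j) -> a i < b i -> False.
Proof.
  intros Ha Hb [Hcm [f [Hf1 [Hf2 [Hf3 Hf4]]]]] [Hcm' [f' [Hf1' [Hf2' [Hf3' Hf4']]]]]
    Hsh i Hi Heq Hlt.
  set (v := a i).
  assert (Hv : 0 < v) by (apply (pos_el n a Ha i Hi)).
  destruct (avoid (map b (seq i (n - i))) v Hv) as [D [HD Hav]].
  { intros t Ht. apply in_map_iff in Ht as [j [<- Hj]]. apply in_seq in Hj.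
    pose proof (sorted_le n b Hb i j ltac:(lia) ltac:(lia)). unfold v; lra. }
  assert (HPI : 0 < PI) by apply PI_RGT_0.
  destruct (unb (c P / (v * PI))) as [K HK].
  set (x := INR (S (K * D)) * v * PI).
  assert (Hx : c P < x).
  { assert (INR K <= INR (S (K * D))) by (apply le_INR; nia).
    apply (Rmult_lt_compat_r (v * PI)) in HK; [|nra].
    unfold Rdiv in HK. rewrite Rmult_assoc, Rinv_l, Rmult_1_r in HK; [|nra].
    assert (0 < v * PI) by nra.
    pose proof (Rmult_le_compat_r (v * PI) _ _ (Rlt_le _ _ H0) H).
    unfold x. rewrite Rmult_assoc. lra. }
  apply (php (fun j => exists m, x = INR (S m) * a j * PI)
    (fun j j' => exists k m', (P <= k)%nat /\ fst (f k) = j /\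
        f' (P' + (k - P))%nat = (j', m') /\ c k = x) i).
  - exists (K * D)%nat. reflexivity.
  - intros j Hj [m Hm]. destruct (Hf3 j m ltac:(lia)) as [k Hk].
    assert (ck : c k = x) by (rewrite Hf4, Hk; simpl; auto).
    assert (Pk : (P <= k)%nat).
    { destruct (le_lt_dec P k) as [h|h]; auto. exfalso.
      pose proof (Hcm k P ltac:(lia)). lra. }
    destruct (f' (P' + (k - P))%nat) as [j' m'] eqn:E.
    assert (c'k : c' (P' + (k - P))%nat = x).
    { rewrite <- Hsh. replace (P + (k - P))%nat with k by lia. auto. }
    assert (Hx' : x = INR (S m') * b j' * PI) by (rewrite <- c'k, Hf4', E; reflexivity).
    assert (Hj'n : (j' < n)%nat) by (pose proof (Hf1' (P' + (k - P))%nat) as G; rewrite E in G; exact G).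
    assert (Hj'i : (j' < i)%nat).
    { destruct (lt_dec j' i) as [h|h]; auto. exfalso.
      apply (Hav K (b j')) with (q := S m').
      - apply in_map_iff. exists j'. split; auto. apply in_seq. lia.
      - unfold x in Hx'. apply (Rmult_eq_reg_r PI); [|lra]. exact Hx'. }
    exists j'. split; [lia|split].
    + exists m'. rewrite Heq by lia. exact Hx'.
    + exists k, m'. repeat split; auto. rewrite Hk; reflexivity.
  - intros j1 j2 j' [k1 [m1 [P1 [F1 [E1 C1]]]]] [k2 [m2 [P2 [F2 [E2 C2]]]]].
    assert (X1 : c' (P' + (k1 - P))%nat = x).
    { rewrite <- Hsh. replace (P + (k1 - P))%nat with k1 by lia. auto. }
    assert (X2 : c' (P' + (k2 - P))%nat = x).
    { rewrite <- Hsh. replace (P + (k2 - P))%nat with k2 by lia. auto. }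
    rewrite Hf4', E1 in X1. rewrite Hf4', E2 in X2. cbn [fst snd] in X1, X2.
    assert (Hj'n : (j' < n)%nat) by (pose proof (Hf1' (P' + (k1 - P))%nat) as G; rewrite E1 in G; exact G).
    pose proof (pos_el n b Hb j' Hj'n).
    assert (INR (S m1) = INR (S m2)).
    { apply (Rmult_eq_reg_r (b j' * PI)); [|nra]. rewrite <- !Rmult_assoc. lra. }
    apply INR_eq in H0. injection H0 as ->.
    rewrite <- E2 in E1. apply Hf2' in E1.
    assert (k1 = k2) by lia. subst. congruence.
Qed.

Lemma min_idx (Pr : nat -> Prop) i : Pr i -> exists i0, Pr i0 /\ forall j, (j < i0)%nat -> ~ Pr j.
Proof.
  revert Pr. induction i as [i IH] using lt_wf_ind. intros Pr Hi.
  destruct (classic (exists j, (j < i)%nat /\ Pr j)) as [[j [Hj Pj]]|Hn].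
  - exact (IH j Hj Pr Pj).
  - exists i. split; auto. intros j Hj Pj. apply Hn; eauto.
Qed.

Theorem mainTheorem3 (N0 n : nat) (a b c c' d : nat -> R) :
  ellipsoid_params n a -> ellipsoid_params n b ->
  is_EH_seq n a c -> is_EH_seq n b c' ->
  (forall k l, (k <= l)%nat -> d k <= d l) ->
  removes_at_most N0 c d -> removes_at_most N0 c' d ->
  forall i, (i < n)%nat -> a i = b i.
Proof.
  intros Ha Hb Hc Hc' _ R1 R2 i Hi.
  destruct (tail_shift _ _ _ R1) as [K1 [p1 H1]].
  destruct (tail_shift _ _ _ R2) as [K2 [p2 H2]].
  assert (Hsh : forall t, c (p1 + K2 + t)%nat = c' (p2 + K1 + t)%nat).
  { intro t. rewrite <- !Nat.add_assoc, <- H1, <- H2. f_equal. lia. }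
  apply NNPP. intro Hne.
  destruct (min_idx (fun j => (j < n)%nat /\ a j <> b j) i (conj Hi Hne))
    as [i0 [[Hi0 Hne0] Hmin]].
  assert (Heq : forall j, (j < i0)%nat -> a j = b j).
  { intros j Hj. apply NNPP. intro h. apply (Hmin j Hj). split; [lia|auto]. }
  destruct (Rtotal_order (a i0) (b i0)) as [h|[h|h]].
  - exact (core n a b c c' _ _ Ha Hb Hc Hc' Hsh i0 Hi0 Heq h).
  - contradiction.
  - apply (core n b a c' c _ _ Hb Ha Hc' Hc (fun t => eq_sym (Hsh t)) i0 Hi0).
    + intros j Hj; symmetry; auto.
    + exact h.
Qed.
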